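(* Let $B\colon\mathbb{R}^n\times\mathbb{R}^n\to\mathbb{R}^n$ be a symmetric bilinear map. Then $\langle B(y,y),y\rangle_{\mathbb{R}^n}=0$ for all $y\in\mathbb{R}^n$ if and only if there exists a linear map $S\colon\mathbb{R}^n\to\mathfrak{so}(n)$ such that $B(y,y)=S(y)(y)$ for all $y\in\mathbb{R}^n$.
   Context: $\langle\cdot,\cdot\rangle_{\mathbb{R}^n}$ is the Euclidean inner product on $\mathbb{R}^n$, and $\mathfrak{so}(n)$ is the space of linear maps $q\colon\mathbb{R}^n\to\mathbb{R}^n$ that are skew-adjoint with respect to it. *)

(* Defs.v *)
(* Vectors of R^n are row vectors 'rV[R]_n, linear maps
   R^n -> R^n are matrices acting on the right: q(y) = y *m Q. *)
From HB Require Import structures.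
From mathcomp Require Import all_boot all_order all_algebra.
Set Implicit Arguments. Unset Strict Implicit. Unset Printing Implicit Defensive.
Import Order.TTheory GRing.Theory Num.Theory.
Local Open Scope ring_scope.

Definition dotR (R : realFieldType) (n : nat) (u v : 'rV[R]_n) : R :=
  \sum_(i < n) u 0 i * v 0 i.

(* Q (as the linear map y |-> y *m Q) is skew-adjoint w.r.t. dotR,
   i.e. Q represents an element of so(n). *)
Definition skew_adjoint (R : realFieldType) (n : nat) (Q : 'M[R]_n) : Prop :=
  forall x y : 'rV[R]_n, dotR (x *m Q) y = - dotR x (y *m Q).

Definition bilinear_map (R : realFieldType) (n : nat)
  (B : 'rV[R]_n -> 'rV[R]_n -> 'rV[R]_n) : Prop :=
  (forall (a : R) x y z, B (a *: x + y) z = a *: B x z + B y z) /\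
  (forall (a : R) x y z, B x (a *: y + z) = a *: B x y + B x z).

Definition symmetric_map (R : realFieldType) (n : nat)
  (B : 'rV[R]_n -> 'rV[R]_n -> 'rV[R]_n) : Prop :=
  forall x y, B x y = B y x.

Definition linear_map (R : realFieldType) (n : nat) (S : 'rV[R]_n -> 'M[R]_n) : Prop :=
  forall (a : R) x y, S (a *: x + y) = a *: S x + S y.

(* Main.v *)
Require Import Defs.
From HB Require Import structures.
From mathcomp Require Import all_boot all_order all_algebra.
From mathcomp Require Import ring lra.
Import Order.TTheory GRing.Theory Num.Theory.
Local Open Scope ring_scope.

Set Implicit Arguments.
Section Aux.
Variables (R : realFieldType) (n : nat).
Implicit Types (x y z u v : 'rV[R]_n).

Lemma dotRC u v : dotR u v = dotR v u.
Proof. by apply: eq_bigr => i _; rewrite mulrC. Qed.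

Lemma dotRDl u v z : dotR (u + v) z = dotR u z + dotR v z.
Proof. by rewrite /dotR -big_split; apply: eq_bigr => i _; rewrite mxE mulrDl. Qed.

Lemma dotRNl u z : dotR (- u) z = - dotR u z.
Proof. by rewrite /dotR -sumrN; apply: eq_bigr => i _; rewrite mxE mulNr. Qed.

Lemma dotRZl a u z : dotR (a *: u) z = a * dotR u z.
Proof. by rewrite /dotR mulr_sumr; apply: eq_bigr => i _; rewrite mxE mulrA. Qed.

Lemma dotRDr u v z : dotR z (u + v) = dotR z u + dotR z v.
Proof. by rewrite !(dotRC z) dotRDl. Qed.

Lemma dotRNr u z : dotR z (- u) = - dotR z u.
Proof. by rewrite !(dotRC z) dotRNl. Qed.

Lemma dotRe u (j : 'I_n) : dotR u (delta_mx 0 j) = u 0 j.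
Proof.
rewrite /dotR (bigD1 j) //= big1 ?addr0; first by rewrite mxE !eqxx mulr1.
by move=> i /negbTE hij; rewrite mxE hij andbF mulr0.
Qed.

Variable B : 'rV[R]_n -> 'rV[R]_n -> 'rV[R]_n.
Hypothesis hB : bilinear_map B.

Lemma B0r y : B y 0 = 0.
Proof.
have := (proj2 hB) 1 y 0 0; rewrite !scale1r addr0 => h.
by apply: (addrI (B y 0)); rewrite addr0 -h.
Qed.

Lemma B0l y : B 0 y = 0.
Proof.
have := (proj1 hB) 1 0 0 y; rewrite !scale1r addr0 => h.
by apply: (addrI (B 0 y)); rewrite addr0 -h.
Qed.

Lemma BDl x y z : B (x + y) z = B x z + B y z.
Proof. by rewrite -{1}(scale1r x) (proj1 hB) scale1r. Qed.
Lemma BDr x y z : B z (x + y) = B z x + B z y.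
Proof. by rewrite -{1}(scale1r x) (proj2 hB) scale1r. Qed.
Lemma BZl a x z : B (a *: x) z = a *: B x z.
Proof. by rewrite -(addr0 (a *: x)) (proj1 hB) B0l addr0. Qed.
Lemma BZr a x z : B z (a *: x) = a *: B z x.
Proof. by rewrite -(addr0 (a *: x)) (proj2 hB) B0r addr0. Qed.
Lemma BNl x z : B (- x) z = - B x z.
Proof. by rewrite -scaleN1r BZl scaleN1r. Qed.
Lemma BNr x z : B z (- x) = - B z x.
Proof. by rewrite -scaleN1r BZr scaleN1r. Qed.

Lemma Bexp y x : B y x = \sum_(i < n) x 0 i *: B y (delta_mx 0 i).
Proof.
rewrite {1}(row_sum_delta x).
apply: (big_ind2 (fun u w => B y u = w)) => //.
- exact: B0r.
- by move=> ? ? ? ? h1 h2; rewrite BDr h1 h2.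
- by move=> i _; rewrite BZr.
Qed.

Definition cc y (i j : 'I_n) := (B y (delta_mx 0 i)) 0 j.

Lemma Bcoord y x j : (B y x) 0 j = \sum_(i < n) x 0 i * cc y i j.
Proof. by rewrite Bexp summxE; apply: eq_bigr => i _; rewrite mxE. Qed.

Definition Sm y : 'M[R]_n := (2/3) *: \matrix_(i, j) (cc y i j - cc y j i).

Lemma keyS y x z :
  dotR (x *m Sm y) z = 2/3 * (dotR (B y x) z - dotR (B y z) x).
Proof.
rewrite /dotR -sumrB mulr_sumr.
under [RHS]eq_bigr => j _ do rewrite !Bcoord mulr_suml mulr_suml -sumrB mulr_sumr.
under [RHS]eq_bigr => j _ do (under eq_bigr => i _ do rewrite mulrBr; rewrite sumrB).
rewrite sumrB [X in _ - X]exchange_big /= -sumrB.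
apply: eq_bigr => j _; rewrite mxE mulr_suml -sumrB; apply: eq_bigr => i _.
rewrite !mxE /=; ring.
Qed.

End Aux.

Theorem lemma6 (R : realFieldType) (n : nat)
  (B : 'rV[R]_n -> 'rV[R]_n -> 'rV[R]_n)
  (hB : bilinear_map B) (hsym : symmetric_map B) :
  (forall y : 'rV[R]_n, dotR (B y y) y = 0) <->
  (exists S : 'rV[R]_n -> 'M[R]_n,
     linear_map S /\ (forall y, skew_adjoint (S y)) /\
     (forall y : 'rV[R]_n, B y y = y *m S y)).
Proof.
split.
- move=> h0.
  have A : forall x y, dotR (B x x) y + 2 * dotR (B x y) x = 0.
    move=> x y.
    have h1 := h0 (x + y); have h2 := h0 (x - y); have h3 := h0 x; have h4 := h0 y.
    rewrite !(BDl hB, BDr hB, BNl hB, BNr hB, dotRDl, dotRDr, dotRNl, dotRNr) in h1 h2.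
    rewrite (hsym y x) in h1 h2.
    lra.
  exists (@Sm R n B); split; [|split].
  + move=> a x y; apply/matrixP => i j.
    rewrite /Sm !mxE /cc (proj1 hB) (proj1 hB) !mxE; ring.
  + move=> y x z.
    have k1 := keyS hB y x z; have k2 := keyS hB y z x.
    rewrite [dotR x _]dotRC; apply: etrans k1 _; apply: esym; apply: etrans (f_equal _ k2) _; ring.
  + move=> y; apply/rowP => j.
    have k := keyS hB y y (delta_mx 0 j); rewrite !dotRe in k.
    have hA := A y (delta_mx 0 j); rewrite dotRe in hA.
    rewrite k; lra.
- move=> [S [_ [hS hB2]]] y.
  have := hS y y y; rewrite -hB2 dotRC => h.
  lra.
Qed.
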